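(* Let $F=\{F_n\}_{n\in\mathbb{Z}}$ be a sequence with values in $\mathbb{D}$ such that $F_n=0$ for $n<n_0$ (for some $n_0\in\mathbb{Z}$) and $F_n\to0$ as $n\to+\infty$. Then there is an absolute constant $C$ such that, for all sufficiently large $n$, $$\big|\arg\mathfrak{a}^{( * )}(z,F^{\langle n\rangle})-\arg\mathfrak{a}^{( * )}(z,F^{\langle n-1\rangle})\big|\leqslant C|F_n|\quad\text{uniformly in }z\in\overline{\mathbb{D}},$$ and in particular this difference tends to $0$ uniformly in $z\in\overline{\mathbb{D}}$ as $n\to\infty$.
   Context: $\mathbb{T}$, $\mathbb{D}$ denote the unit circle and open unit disc; $m$ is normalized Lebesgue measure on $\mathbb{T}$. $F^{\langle N\rangle}_n=F_n\chi_{|n|\leqslant N}$. For a finitely supported $G$ with values in $\mathbb{D}$: $\widetilde X_n(z)=I$ below the support, $\widetilde X_n=(1-|G_n|^2)^{-1/2}\begin{pmatrix}1&\overline{G_n}z^{-n}\\ G_nz^n&1\end{pmatrix}\widetilde X_{n-1}$, and above the support $\widetilde X_n=\begin{pmatrix}\mathfrak{a}(z,G)&\mathfrak{b}^{( * )}(z,G)\\ \mathfrak{b}(z,G)&\mathfrak{a}^{( * )}(z,G)\end{pmatrix}$ with $f^{( * )}(z)=\overline{f(\bar z^{-1})}$. The function $\mathfrak{a}^{( * )}(\cdot,G)$ is analytic in $\mathbb{D}$, continuous and nonvanishing on $\overline{\mathbb{D}}$, outer, with $\mathfrak{a}^{( * )}(0,G)>0$; its argument $\arg\mathfrak{a}^{(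 * )}(z,G)$ is the continuous branch on $\overline{\mathbb{D}}$ with value $0$ at $z=0$, i.e. $\frac12\int_{\mathbb{T}}\operatorname{Im}\frac{\xi+z}{\xi-z}\log(1+|\mathfrak{b}(\xi,G)|^2)\,dm(\xi)$ in $\mathbb{D}$, extended to $\mathbb{T}$ by the corresponding principal-value (Hilbert transform) integral. *)

(* Defs.v *)
From HB Require Import structures.
From mathcomp Require Import all_boot all_order all_algebra.
From mathcomp Require Import complex.
From mathcomp Require Import all_classical all_reals.
From mathcomp Require Import all_analysis.
Set Implicit Arguments. Unset Strict Implicit. Unset Printing Implicit Defensive.
Import Order.TTheory GRing.Theory Num.Theory.
Import numFieldTopology.Exports numFieldNormedType.Exports.
Local Open Scope ring_scope.
Local Open Scope complex_scope.
Local Open Scope classical_set_scope.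

Section NLFT.
Variable R : realType.

Definition cmod (z : R[i]) : R := Normc.normc z.

Definition trunc (F : int -> R[i]) (N : int) : int -> R[i] :=
  fun n => if (`|n|%R <= N)%R then F n else 0.

Definition step (G : int -> R[i]) (n : int) (z : R[i]) : 'M[R[i]]_2 :=
  ((Num.sqrt (1 - cmod (G n) ^+ 2))^-1)%:C *:
  \matrix_(i < 2, j < 2)
     (if (val i == 0%N) then (if (val j == 0%N) then 1 else conjc (G n) * z ^ (- n))
      else (if (val j == 0%N) then G n * z ^ n else 1)).

(* transfer matrix over the indices lo, lo+1, ..., lo+k-1 (highest index on
   the left), starting from the identity below lo *)
Fixpoint transfer (G : int -> R[i]) (lo : int) (k : nat) (z : R[i]) : 'M[R[i]]_2 :=
  match k with
  | O => 1%:M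
  | S k' => step G (lo + k'%:Z) z *m transfer G lo k' z
  end.

(* \tilde X above the support, computed on the window [lo, hi] which
   must contain the support of G (and hi >= lo - 1) *)
Definition Xabove (G : int -> R[i]) (lo hi : int) (z : R[i]) : 'M[R[i]]_2 :=
  transfer G lo (absz (hi - lo + 1)%R) z.

Definition astar (G : int -> R[i]) (lo hi : int) (z : R[i]) : R[i] :=
  Xabove G lo hi z ord_max ord_max.

Definition cdisc2 : set (R * R) := [set p | p.1 ^+ 2 + p.2 ^+ 2 <= 1].

(* theta is the argument of a^{star}(., G): the continuous branch on the
   closed disc with value 0 at z = 0 *)
Definition is_arg_astar (G : int -> R[i]) (lo hi : int) (theta : R[i] -> R) : Prop :=
  [/\ {within cdisc2, continuous (fun p : R * R => theta (p.1 +i* p.2))},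
      theta 0 = 0 &
      forall z : R[i], z != 0 -> cmod z <= 1 ->
        astar G lo hi z = (cmod (astar G lo hi z))%:C * (cos (theta z) +i* sin (theta z))].

End NLFT.

(* Main.v *)
Require Import Defs.
From HB Require Import structures.
From mathcomp Require Import all_boot all_order all_algebra.
From mathcomp Require Import complex.
From mathcomp Require Import all_classical all_reals.
From mathcomp Require Import all_analysis.
From mathcomp Require Import ring lra zify.
Import Order.TTheory GRing.Theory Num.Theory.
Import numFieldTopology.Exports numFieldNormedType.Exports.
Local Open Scope ring_scope.
Local Open Scope complex_scope.
Local Open Scope classical_set_scope.
Section S. Variable R : realType.
Implicit Types (G : int -> R[i]) (z : R[i]).
Lemma transfer_ext G1 G2 lo k z :
  (forall m, (lo <= m)%R -> (m < lo + k%:Z)%R -> G1 m = G2 m) ->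
  transfer G1 lo k z = transfer G2 lo k z.
Proof.
elim: k => //= k IH H.
rewrite IH; last first.
  move=> m h1 h2; apply: H => //; apply: (lt_trans h2).
  by rewrite ltrD2l ltz_nat.
congr (_ *m _); rewrite /step H //; first by rewrite lerDl.
by rewrite ltrD2l ltz_nat.
Qed.




Definition cfac G m : R[i] := ((Num.sqrt (1 - cmod (G m) ^+ 2))^-1)%:C.

Lemma step01 G m z (M : 'M[R[i]]_2) :
  (step G m z *m M) ord0 ord_max = cfac G m * (M ord0 ord_max + (G m)^* * z ^ (- m) * M ord_max ord_max).
Proof.
rewrite !mxE !big_ord_recr big_ord0 /= !mxE /= add0r /cfac.
rewrite (_ : widen_ord _ _ = ord0); last by apply/val_inj.
by rewrite mulr1 mulrDr !mulrA.
Qed.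

Lemma step11 G m z (M : 'M[R[i]]_2) :
  (step G m z *m M) ord_max ord_max = cfac G m * (G m * z ^ m * M ord0 ord_max + M ord_max ord_max).
Proof.
rewrite !mxE !big_ord_recr big_ord0 /= !mxE /= add0r /cfac.
rewrite (_ : widen_ord _ _ = ord0); last by apply/val_inj.
by rewrite mulr1 mulrDr !mulrA.
Qed.

Lemma Jid (A B g : R[i]) :
  (A + g * B) * (A + g * B)^* - (B + g^* * A) * (B + g^* * A)^*
  = (1 - g * g^*) * (A * A^* - B * B^*).
Proof. rewrite !rmorphD !rmorphM /= ?conjCK ?conjcK; ring. Qed.

Lemma cst_prop G m : cmod (G m) < 1 -> cfac G m * cfac G m * (1 - G m * (G m)^*) = 1.
Proof.
move=> h; rewrite -sqr_normc /cfac.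
have -> : `|G m| = (cmod (G m))%:C by [].
set s := 1 - cmod (G m) ^+ 2.
have s0 : 0 < s.
  rewrite /s subr_gt0 expr_lt1 //.
  by rewrite /cmod; case: (G m) => a b /=; apply: sqrtr_ge0.
have -> : 1 - (cmod (G m))%:C ^+ 2 = s%:C by rewrite /s rmorphB rmorphXn rmorph1.
rewrite -!rmorphM -expr2 exprVn sqr_sqrtr ?(ltW s0) // mulVf ?gt_eqF //.
Qed.

Lemma aux (z w c b g A : R[i]) : w != 0 ->
  z * w * (c * (b + g / w * A)) = z * (c * (w * b + g * A)).
Proof. by move=> w0; field. Qed.

Lemma transfer_inv G lo k z : (forall m, cmod (G m) < 1) -> z != 0 -> cmod z <= 1 ->
  1 + `|z ^ (lo + k%:Z) * transfer G lo k z ord0 ord_max| ^+ 2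
   <= `|transfer G lo k z ord_max ord_max| ^+ 2.
Proof.
move=> hG z0 hz; elim: k => [|k IH] /=.
  by rewrite !mxE /= mulr0 normr0 expr0n /= addr0 normr1 expr1n.
rewrite step01 step11.
set A := transfer G lo k z ord_max ord_max.
set b := transfer G lo k z ord0 ord_max.
move: IH; rewrite -/A -/b.
set m := lo + k%:Z. set g := G m. set c := cfac G m.
set B := z ^ m * b => IH.
have E1 : z ^ (lo + k.+1%:Z) * (c * (b + g^* * z ^ (- m) * A))
          = z * (c * (B + g^* * A)).
  have -> : lo + k.+1%:Z = 1 + m by rewrite /m intS addrCA.
  rewrite expfzDr // expr1z -invr_expz /B.
  have w0 : z ^ m != 0 by apply: expfz_neq0.
  exact: aux.
have E2 : c * (g * z ^ m * b + A) = c * (g * B + A) by rewrite /B mulrA.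
rewrite E1 E2.
clearbody B.
have key : `|c * (g * B + A)| ^+ 2 - `|c * (B + g^* * A)| ^+ 2
           = `|A| ^+ 2 - `|B| ^+ 2.
  rewrite [g * B + A]addrC !normrM !exprMn -mulrBr !sqr_normc Jid.
  have -> : c^* = c by rewrite /c /cfac conjc_real.
  by rewrite mulrA cst_prop // mul1r.
have hz2 : `|z| ^+ 2 <= 1.
  rewrite expr_le1 //; have -> : `|z| = (cmod z)%:C by [].
  by rewrite lecR.
have h1 : 1 + `|z * (c * (B + g^* * A))| ^+ 2 <= 1 + `|c * (B + g^* * A)| ^+ 2.
  rewrite lerD2l normrM exprMn; apply: ler_piMl => //; exact: exprn_ge0.
apply: le_trans h1 _.
by rewrite -lerBrDr key lerBrDr.
Qed.


Lemma atan_le (y : R) : 0 <= y -> atan y <= y.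
Proof.
rewrite le_eqVlt => /orP[/eqP <-|y0]; first by rewrite atan0.
have hc : {within `[0, y], continuous (@atan R)}.
  by apply: continuous_subspaceT => x; exact: continuous_atan.
have [c _ h] := MVT y0 (fun x _ => is_derive1_atan x) hc.
move/eqP: h; rewrite atan0 !subr0 => /eqP ->.
apply: ler_piMl; first exact: ltW.
have := sqr_ge0 c => hc2.
rewrite invf_le1; lra.
Qed.

Lemma abs_atan (t : R) : `|atan t| <= `|t|.
Proof.
have pos (u : R) : 0 <= u -> `|atan u| <= `|u|.
  move=> h; have ha : 0 <= atan u by rewrite -atan0; exact: le_atan.
  rewrite !ger0_norm //; exact: atan_le.
case: (leP 0 t) => h; first exact: pos.
have := pos (- t); rewrite atanN !normrN; apply; rewrite oppr_ge0; exact: ltW.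
Qed.

Lemma abs_le_tan (d : R) : -(pi/2) < d < pi/2 -> `|d| <= `|tan d|.
Proof.
move=> hd; have hd' : d \in `](-(pi/2)), (pi/2)[%R by rewrite in_itv /= hd.
by rewrite -{1}(tanK hd'); exact: abs_atan.
Qed.

Lemma angle_real (P Q x y r cd sd : R) : 0 <= P -> 0 < Q -> `|x| <= r -> `|y| <= r -> r <= 1/2 ->
  P * cd = Q * (1 + x) -> P * sd = Q * y -> 0 < cd /\ `|sd| <= 2 * r * cd.
Proof.
move=> P0 Q0 hx hy hr e1 e2.
have x1 : 0 < 1 + x.
  have := ler_norm x; rewrite -normrN => hn. 
  have : - x <= 1/2 by apply: le_trans (ler_norm _) _; rewrite normrN; apply: le_trans hx hr.
  lra.
have Pc : 0 < P * cd by rewrite e1 mulr_gt0.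
have Pp : 0 < P.
  by rewrite lt_neqAle P0 andbT; apply/eqP => h; move: Pc; rewrite -h mul0r ltxx.
have cd0 : 0 < cd by move: Pc; rewrite pmulr_rgt0.
split => //.
have e3 : P * `|sd| = Q * `|y|.
  by rewrite -(ger0_norm P0) -normrM e2 normrM (ger0_norm (ltW Q0)).
rewrite -(ler_pM2l Pp) e3.
have -> : P * (2 * r * cd) = 2 * r * (P * cd) by ring.
rewrite e1.
have hx2 : - x <= r by apply: le_trans (ler_norm _) _; rewrite normrN.
have r0 : 0 <= r by apply: le_trans (normr_ge0 _) hy.
have h1 : Q * `|y| <= Q * r by rewrite ler_pM2l.
have h2 : 0 <= Q * (r * (1 + 2 * x)).
  apply: mulr_ge0; first exact: ltW.
  apply: mulr_ge0 => //; lra.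
nra.
Qed.

Lemma cmod_ge0 (z : R[i]) : 0 <= cmod z.
Proof. by case: z => a b; rewrite /cmod /= sqrtr_ge0. Qed.

Lemma angle_cplx (a1 a0 u : R[i]) (c t1 t0 : R) : 0 < c -> a0 != 0 -> cmod u <= 1/2 ->
  a1 = c%:C * (a0 * (1 + u)) ->
  a1 = (cmod a1)%:C * (cos t1 +i* sin t1) ->
  a0 = (cmod a0)%:C * (cos t0 +i* sin t0) ->
  0 < cos (t1 - t0) /\ `|sin (t1 - t0)| <= 2 * cmod u * cos (t1 - t0).
Proof.
move=> c0 a00 hu e h1 h0.
have Q0p : 0 < cmod a0.
  rewrite lt_neqAle cmod_ge0 andbT eq_sym; apply: contra a00 => /eqP h.
  by apply/eqP; apply: Normc.eq0_normc.
have P0 := cmod_ge0 a1.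
move: e; rewrite {1}h1 {1}h0.
move: (cmod a1) (cmod a0) P0 Q0p => P Q P0 Q0p.
case: u hu => x y hu.
have hx : `|x| <= cmod (x +i* y).
  rewrite -sqrtr_sqr /cmod /= ler_sqrt ?addr_ge0 ?sqr_ge0 // lerDl sqr_ge0 //.
have hy : `|y| <= cmod (x +i* y).
  rewrite -sqrtr_sqr /cmod /= ler_sqrt ?addr_ge0 ?sqr_ge0 // lerDr sqr_ge0 //.
move/eqP; rewrite eq_complex /= => /andP[/eqP e1 /eqP e2].
have E1 : P * cos (t1 - t0) = (c * Q) * (1 + x).
  rewrite cosB.
  have -> : P * (cos t1 * cos t0 + sin t1 * sin t0)
     = (P * cos t1 - 0 * sin t1) * cos t0 + (P * sin t1 + 0 * cos t1) * sin t0 by ring.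
  rewrite e1 e2 -[RHS]mulr1 -(cos2Dsin2 t0); ring.
have E2 : P * sin (t1 - t0) = (c * Q) * y.
  rewrite sinB.
  have -> : P * (sin t1 * cos t0 - cos t1 * sin t0)
     = (P * sin t1 + 0 * cos t1) * cos t0 - (P * cos t1 - 0 * sin t1) * sin t0 by ring.
  rewrite e1 e2 -[RHS]mulr1 -(cos2Dsin2 t0); ring.
have H := angle_real _ _ _ _ _ _ _ P0 (mulr_gt0 c0 Q0p) hx hy hu E1 E2.
exact: H.
Qed.


Lemma comp_within (g : R * R -> R) (x y : R) : x ^+ 2 + y ^+ 2 <= 1 ->
  {within (@cdisc2 R), continuous g} ->
  {within `[0, 1], continuous (fun t => g (t * x, t * y))}.
Proof.
move=> hxy /subspace_continuousP hg; apply/subspace_continuousP => t ht.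
have hin s : `[0, 1] s -> (@cdisc2 R) (s * x, s * y).
  rewrite /= in_itv /= => /andP[s0 s1]; rewrite /cdisc2 /= !exprMn -mulrDr.
  apply: le_trans _ hxy; apply: ler_piMl; first by rewrite addr_ge0 ?sqr_ge0.
  by rewrite expr_le1.
have hc : (fun s => (s * x, s * y)) @ nbhs t --> (nbhs (t * x), nbhs (t * y)).
  have h1 := @mulrr_continuous _ x t. have h2 := @mulrr_continuous _ y t.
  have h3 := cvg_pair h1 h2.
  apply: h3; typeclasses eauto.

have hh : (fun s => (s * x, s * y)) @ within `[0, 1] (nbhs t)
          --> within ((@cdisc2 R)) (nbhs (t * x, t * y)).
  move=> W hW; have := hc _ hW; rewrite /= !nbhs_simpl /=.
  apply: filterS => s hs hs01; apply: hs; exact: hin.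
exact: cvg_comp hh (hg _ (hin t ht)).
Qed.

Lemma cmod_le1 (x y : R) : (cmod (x +i* y) <= 1) = (x ^+ 2 + y ^+ 2 <= 1).
Proof. by rewrite /cmod /= -{1}sqrtr1 ler_sqrt. Qed.

Lemma arg_small (d : R[i] -> R) :
  {within (@cdisc2 R), continuous (fun p : R * R => d (p.1 +i* p.2))} -> d 0 = 0 ->
  (forall z, z != 0 -> cmod z <= 1 -> 0 < cos (d z)) ->
  forall z, cmod z <= 1 -> -(pi/2) < d z < pi/2.
Proof.
move=> hc d0 hpos z hz.
have pi2 : 0 < pi / 2 :> R by rewrite divr_gt0 ?pi_gt0.
have [->|z0] := eqVneq z 0; first by rewrite d0 pi2 oppr_lt0 pi2.
case: z hz z0 => x y; rewrite cmod_le1 => hxy z0.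
set f := fun t => d ((t * x) +i* (t * y)).
have fc : {within `[0, 1], continuous f} := comp_within _ _ _ hxy hc.
have f0 : f 0 = 0 by rewrite /f !mul0r; exact: d0.
have f1 : f 1 = d (x +i* y) by rewrite /f !mul1r.
have fpos t : t \in `[0, 1]%R -> 0 < cos (f t).
  rewrite in_itv /= => /andP[t0 t1].
  have [->|tn0] := eqVneq t 0; first by rewrite f0 cos0 ltr01.
  apply: hpos.
    apply: contra z0; rewrite !eq_complex /= => /andP[a b].
    rewrite mulf_eq0 (negbTE tn0) /= in a; rewrite mulf_eq0 (negbTE tn0) /= in b.
    by rewrite a b.
  rewrite cmod_le1 !exprMn -mulrDr; apply: le_trans _ hxy; apply: ler_piMl.
    by rewrite addr_ge0 ?sqr_ge0.
  by rewrite expr_le1.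
rewrite -f1; apply/andP; split; rewrite ltNge; apply/negP => h.
  have [|c cI fc2] := IVT (v := - (pi / 2)) ler01 fc.
    by rewrite f0 ge_min le_max h orbT /= oppr_le0 (ltW pi2).
  by move: (fpos c cI); rewrite fc2 cosN cos_pihalf ltxx.
have [|c cI fc2] := IVT (v := pi / 2) ler01 fc.
  by rewrite f0 ge_min le_max h orbT andbT (ltW pi2).
by move: (fpos c cI); rewrite fc2 cos_pihalf ltxx.
Qed.
End S.

Section M. Variable R : realType.

Lemma trunc_lt1 (F : int -> R[i]) N m : (forall m, cmod (F m) < 1) -> cmod (trunc F N m) < 1.
Proof. by move=> h; rewrite /trunc; case: ifP => _ //; rewrite /cmod Normc.normc0 ltr01. Qed.

Lemma astar_rel (F : int -> R[i]) (n0 n : int) z : (n0 <= n)%R -> (1 - n0 <= n)%R -> (0 <= n)%R ->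
  astar (trunc F n) n0 n z
   = cfac R F n * (F n * z ^ n * transfer (trunc F (n-1)) n0 (absz (n - n0)) z ord0 ord_max
                  + astar (trunc F (n-1)) n0 (n-1) z)
  /\ (n0 + (absz (n - n0))%:Z = n)%R
  /\ astar (trunc F (n-1)) n0 (n-1) z = transfer (trunc F (n-1)) n0 (absz (n - n0)) z ord_max ord_max.
Proof.
move=> h1 h2 h3.
set k := absz (n - n0).
have hk : (n - n0)%R = k%:Z by rewrite /k gez0_abs // subr_ge0.
have habs1 : absz (n - n0 + 1) = k.+1.
  by rewrite /k; lia.
have habs0 : absz (n - 1 - n0 + 1) = k.
  by rewrite /k; lia.
have hn : (n0 + k%:Z = n)%R by lia.
have e0 : astar (trunc F (n-1)) n0 (n-1) z = transfer (trunc F (n-1)) n0 k z ord_max ord_max.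
  by rewrite /astar /Xabove habs0.
split; last by split.
rewrite e0 /astar /Xabove habs1 /= hn step11.
rewrite (transfer_ext _ (trunc F n) (trunc F (n - 1))); last first.
  move=> m hm1 hm2; rewrite /trunc.
  have -> : (`|m| <= n)%R = true by apply/idP; rewrite ler_norml; lia.
  by have -> : (`|m| <= n - 1)%R = true by apply/idP; rewrite ler_norml; lia.
have -> : trunc F n n = F n by rewrite /trunc ger0_norm // lexx.
by rewrite /cfac /trunc ger0_norm // lexx.
Qed.

Lemma main_bound (F : int -> R[i]) (n0 n : int) th1 th0 :
  (forall m, cmod (F m) < 1) -> cmod (F n) < 1/2 -> (n0 <= n)%R -> (1 - n0 <= n)%R -> (0 <= n)%R ->
  is_arg_astar (trunc F n) n0 n th1 -> is_arg_astar (trunc F (n-1)) n0 (n-1) th0 ->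
  forall z, cmod z <= 1 -> `|th1 z - th0 z| <= 2 * cmod (F n).
Proof.
move=> hF hFn h1 h2 h3 [c1 z1 e1] [c0 z0' e0].
set d := fun z => th1 z - th0 z.
have key z : z != 0 -> cmod z <= 1 ->
    0 < cos (d z) /\ `|sin (d z)| <= 2 * cmod (F n) * cos (d z).
  move=> zn0 hz.
  have [ea [ek eb]] := astar_rel F n0 n z h1 h2 h3.
  have hinv := transfer_inv R (trunc F (n-1)) n0 (absz (n-n0)) z
     (fun m => trunc_lt1 F (n-1) m hF) zn0 hz.
  rewrite ek -eb in hinv.
  move: ea hinv.
  set a0 := astar (trunc F (n-1)) n0 (n-1) z.
  set b := transfer (trunc F (n - 1)) n0 (absz (n - n0)) z ord0 ord_max.
  move=> ea hinv.
  have h1B : 1 <= 1 + `|z ^ n * b| ^+ 2 by rewrite lerDl exprn_ge0.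
  have a0n : a0 != 0.
    apply/eqP => h; move: (le_trans h1B hinv); rewrite h normr0 expr0n /=.
    by rewrite ler10.
  have hB : `|z ^ n * b| <= `|a0|.
    rewrite -(ler_pXn2r (ltn0Sn 1)) ?nnegrE ?normr_ge0 //.
    by apply: le_trans hinv; rewrite lerDr.
  set u := F n * (z ^ n * b) / a0.
  have hu0 : cmod u <= cmod (F n).
    rewrite -lecR; change (`|u| <= `|F n|).
    rewrite /u normrM normfV normrM ler_pdivrMr ?normr_gt0 //.
    by apply: ler_wpM2l => //; exact: normr_ge0.
  have hu : cmod u <= 1/2 by apply: le_trans hu0 (ltW hFn).
  set c := (Num.sqrt (1 - cmod (F n) ^+ 2))^-1.
  have cpos : 0 < c.
    by rewrite invr_gt0 sqrtr_gt0 subr_gt0 expr_lt1 ?hF // cmod_ge0.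
  have ceq : astar (trunc F n) n0 n z = c%:C * (a0 * (1 + u)).
    rewrite ea /cfac; congr (_ * _).
    by rewrite /u mulrDr mulr1 (mulrC a0) divfK // addrC mulrA.
  have [cp hs] := angle_cplx R _ _ _ _ _ _ cpos a0n hu ceq (e1 z zn0 hz) (e0 z zn0 hz).
  split => //; apply: le_trans hs _.
  apply: ler_wpM2r; first exact: ltW.
  by apply: ler_wpM2l.
have hc : {within (@cdisc2 R), continuous (fun p : R * R => d (p.1 +i* p.2))}.
  move=> p; exact: continuousB (c1 p) (c0 p).
have d0 : d 0 = 0 by rewrite /d z1 z0' subrr.
have hsmall := arg_small R d hc d0 (fun z zn hz => (key z zn hz).1).
move=> z hz.
have [->|zn] := eqVneq z 0.
  by rewrite z1 z0' subrr normr0 mulr_ge0 // cmod_ge0.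
have [cpos hsin] := key z zn hz.
apply: le_trans (abs_le_tan R _ (hsmall z hz)) _.
by rewrite /tan normrM normfV (gtr0_norm cpos) ler_pdivrMr.
Qed.
End M.

Local Close Scope complex_scope.
Local Close Scope classical_set_scope.
Theorem lemma4p2 (R : realType) :
  exists C : R,
  forall (F : int -> R[i]) (n0 : int),
    (forall n : int, cmod (F n) < 1) ->
    (forall n : int, (n < n0)%R -> F n = 0) ->
    (forall eps : R, 0 < eps -> exists N : int, forall n : int, (N <= n)%R -> cmod (F n) < eps) ->
    (exists N : int, forall n : int, (N <= n)%R ->
       forall theta1 theta0 : R[i] -> R,
         is_arg_astar (trunc F n) n0 n theta1 ->
         is_arg_astar (trunc F (n - 1)) n0 (n - 1) theta0 ->
         forall z : R[i], cmod z <= 1 ->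
           `|theta1 z - theta0 z| <= C * cmod (F n))
    /\
    (forall eps : R, 0 < eps -> exists N : int, forall n : int, (N <= n)%R ->
       forall theta1 theta0 : R[i] -> R,
         is_arg_astar (trunc F n) n0 n theta1 ->
         is_arg_astar (trunc F (n - 1)) n0 (n - 1) theta0 ->
         forall z : R[i], cmod z <= 1 ->
           `|theta1 z - theta0 z| < eps).
Proof.
exists 2 => F n0 hF hsupp hlim.
have [N1 hN1] := hlim (1/2) (divr_gt0 ltr01 (ltr0n _ 2)).
set N : int := (`|N1| + `|n0| + 1)%R.
have bound : forall n : int, (N <= n)%R ->
    forall theta1 theta0 : R[i] -> R,
         is_arg_astar (trunc F n) n0 n theta1 ->
         is_arg_astar (trunc F (n - 1)) n0 (n - 1) theta0 ->
         forall z : R[i], cmod z <= 1 ->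
           `|theta1 z - theta0 z| <= 2 * cmod (F n).
  move=> n hn th1 th0 a1 a0 z hz.
  apply: (main_bound R F n0 n th1 th0 hF (hN1 n _)) => //; rewrite /N in hn; lia.
split; first by exists N.
move=> eps he.
have [N2 hN2] := hlim (eps / 2) (divr_gt0 he (ltr0n _ 2)).
exists (`|N| + `|N2|)%R => n hn th1 th0 a1 a0 z hz.
apply: le_lt_trans (bound n _ th1 th0 a1 a0 z hz) _; first by lia.
have := hN2 n ltac:(lia); lra.
Qed.
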